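(* Let $n\ge 1$ and let $D_0,D_1,\dots,D_{2n}$ be positive integers. For $i=1,\dots,n$ let $A_i=\{A_i^{s}\}_{s=1}^{d_i}\subset M_{D_{2i-2}\times D_{2i-1}}(\mathbb{C})$ be injective MPS tensors, and let $B_i=\{B_i^{t}\}_{t=1}^{e_i}$ and $B_i'=\{B_i'^{t}\}_{t=1}^{e_i}$ be families in $M_{D_{2i-1}\times D_{2i}}(\mathbb{C})$, with $B_i$ not identically zero for every $i$. Suppose that for all indices $s_1,t_1,\dots,s_n,t_n$, $$A_1^{s_1}B_1^{t_1}A_2^{s_2}B_2^{t_2}\cdots A_n^{s_n}B_n^{t_n}=A_1^{s_1}B_1'^{t_1}A_2^{s_2}B_2'^{t_2}\cdots A_n^{s_n}B_n'^{t_n}$$ (equality of $D_0\times D_{2n}$ matrices). Then there exist nonzero scalars $\beta_1,\dots,\beta_n\in\mathbb{C}$ with $\prod_{i=1}^n\beta_i=1$ such that $B_i^{t}=\beta_i B_i'^{t}$ for all $i$ and all $t$.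
   Context: A family $A=\{A^s\}_{s=1}^{d}\subset M_{D\times D'}(\mathbb{C})$ is called an injective MPS tensor if the linear map $M_{D'\times D}(\mathbb{C})\to\mathbb{C}^d$, $X\mapsto(\mathrm{tr}(XA^s))_{s=1}^d$, is injective; equivalently, the matrices $A^1,\dots,A^d$ span $M_{D\times D'}(\mathbb{C})$. *)

(* Defs.v *)
From HB Require Import structures.
From mathcomp Require Import all_boot all_order all_algebra.
From mathcomp Require Import complex Rstruct.
Set Implicit Arguments. Unset Strict Implicit. Unset Printing Implicit Defensive.
Import GRing.Theory.
Local Open Scope ring_scope.

Notation CC := (Rdefinitions.R)[i].

Definition injective_mps (D D' d : nat) (A : 'I_d -> 'M[CC]_(D, D')) : Prop :=
  forall X : 'M[CC]_(D', D), (forall s, \tr (X *m A s) = 0) -> X = 0.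

Definition extA (n : nat) (D : nat -> nat)
  (a : forall j : 'I_n, 'M[CC]_(D j.*2, D j.*2.+1)) (j : nat)
  : 'M[CC]_(D j.*2, D j.*2.+1) :=
  match (j < n)%N as b return (j < n)%N = b -> 'M[CC]_(D j.*2, D j.*2.+1) with
  | true => fun h => a (Ordinal h)
  | false => fun _ => 0
  end erefl.

Definition extB (n : nat) (D : nat -> nat)
  (b : forall j : 'I_n, 'M[CC]_(D j.*2.+1, D j.+1.*2)) (j : nat)
  : 'M[CC]_(D j.*2.+1, D j.+1.*2) :=
  match (j < n)%N as c return (j < n)%N = c -> 'M[CC]_(D j.*2.+1, D j.+1.*2) with
  | true => fun h => b (Ordinal h)
  | false => fun _ => 0
  end erefl.

Fixpoint chain (D : nat -> nat)
  (a : forall j : nat, 'M[CC]_(D j.*2, D j.*2.+1))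
  (b : forall j : nat, 'M[CC]_(D j.*2.+1, D j.+1.*2)) (m : nat)
  : 'M[CC]_(D 0, D m.*2) :=
  match m return 'M[CC]_(D 0, D m.*2) with
  | 0 => 1%:M
  | m'.+1 => chain a b m' *m a m' *m b m'
  end.

(* The MPS product A_1^{s_1} B_1^{t_1} ... A_n^{s_n} B_n^{t_n}, with the
   paper's index i = j+1 for j : 'I_n; A_j^s : 'M_(D (2j), D (2j+1)),
   B_j^t : 'M_(D (2j+1), D (2j+2)). *)
Definition mps_prod (n : nat) (D : nat -> nat) (d e : 'I_n -> nat)
  (A : forall j : 'I_n, 'I_(d j) -> 'M[CC]_(D j.*2, D j.*2.+1))
  (B : forall j : 'I_n, 'I_(e j) -> 'M[CC]_(D j.*2.+1, D j.+1.*2))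
  (s : forall j : 'I_n, 'I_(d j)) (t : forall j : 'I_n, 'I_(e j))
  : 'M[CC]_(D 0, D n.*2) :=
  chain (extA (fun j => A j (s j))) (extB (fun j => B j (t j))) n.

(* Main.v *)
Require Import Defs.
From mathcomp Require Import all_boot all_order all_algebra.
From mathcomp Require Import complex Rstruct.
From mathcomp Require Import ring.
Import GRing.Theory.
Local Open Scope ring_scope.

Lemma dot_vec (D D' : nat) (A : 'M[CC]_(D, D')) (v : 'rV_(D * D')) :
  \sum_k v 0 k * mxvec A 0 k = \sum_i \sum_j vec_mx v i j * A i j.
Proof.
rewrite (reindex _ (curry_mxvec_bij _ _)) /= pair_bigA /=.
by apply: eq_bigr => [[i j]] _ /=; rewrite mxvecE mxE.
Qed.

Lemma span_inj {D D' d : nat} (A : 'I_d -> 'M[CC]_(D, D')) :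
  injective_mps A -> forall Y, exists c : 'I_d -> CC, Y = \sum_s c s *: A s.
Proof.
move=> hA Y.
pose M := \matrix_(s < d) mxvec (A s).
have hfree : row_free M^T.
  apply: inj_row_free => v hv.
  have hX : (vec_mx v)^T = 0.
    apply: hA => s.
    have := congr1 (fun N : 'M[CC]_(1, d) => N 0 s) hv; rewrite !mxE => <-.
    rewrite /mxtrace.
    under eq_bigr => i _ do rewrite mxE.
    rewrite exchange_big /=.
    under [RHS]eq_bigr => k _ do rewrite !mxE.
    rewrite dot_vec; apply: eq_bigr => i _; apply: eq_bigr => j _.
    by rewrite !mxE.
  by apply/eqP; rewrite -vec_mx_eq0 -(inj_eq (@trmx_inj _ _ _)) hX trmx0.
have hfull : row_full M by rewrite /row_full -mxrank_tr.
case/row_fullP: hfull => Bm hB.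
exists (fun s => (mxvec Y *m Bm) 0 s).
apply: (can_inj mxvecK).
rewrite linear_sum /=.
rewrite -[LHS]mulmx1 -hB mulmxA mulmx_sum_row.
by apply: eq_bigr => s _; rewrite rowK linearZ.
Qed.

Definition dupd {I : eqType} {T : I -> Type} (f : forall i, T i) (i0 : I) (x : T i0)
  (i : I) : T i :=
  match i0 =P i with ReflectT e => eq_rect i0 T x i e | ReflectF _ => f i end.

Lemma dupd_eq {I : eqType} {T : I -> Type} (f : forall i, T i) (i0 : I) (x : T i0) :
  dupd f i0 x i0 = x.
Proof.
rewrite /dupd; case: eqP => [e|]; last by [].
by rewrite (eq_irrelevance e (erefl i0)).
Qed.

Lemma dupd_neq {I : eqType} {T : I -> Type} (f : forall i, T i) (i0 : I) (x : T i0) i :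
  i != i0 -> dupd f i0 x i = f i.
Proof. move=> h; rewrite /dupd; case: eqP => [e|//]; exfalso; move/eqP: h; apply; by rewrite e. Qed.

Lemma chain_ext (D : nat -> nat) (a a' : forall j : nat, 'M[CC]_(D j.*2, D j.*2.+1))
  (b b' : forall j : nat, 'M[CC]_(D j.*2.+1, D j.+1.*2)) N :
  (forall j, (j < N)%N -> a j = a' j) -> (forall j, (j < N)%N -> b j = b' j) ->
  chain a b N = chain a' b' N.
Proof.
elim: N => [|N IH] ha hb //=.
rewrite IH ?ha ?hb // => j hj; [apply: ha | apply: hb]; exact: ltnW.
Qed.

Lemma chain_lin (D : nat -> nat) (b : forall j : nat, 'M[CC]_(D j.*2.+1, D j.+1.*2))
  N m k (a : forall j : nat, 'M[CC]_(D j.*2, D j.*2.+1))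
  (F : 'I_k -> forall j : nat, 'M[CC]_(D j.*2, D j.*2.+1)) (c : 'I_k -> CC) :
  (forall s j, j != m -> F s j = a j) -> a m = \sum_s c s *: F s m -> (m < N)%N ->
  chain a b N = \sum_s c s *: chain (F s) b N.
Proof.
move=> hF ham; elim: N => [//|N IH] hmN /=.
rewrite ltnS leq_eqVlt in hmN; case/orP: hmN => [/eqP em|hmN].
  subst m.
  have hch : forall s, chain (F s) b N = chain a b N.
    move=> s; apply: chain_ext => // j hj; apply: hF; by rewrite ltn_eqF.
  rewrite ham mulmx_sumr mulmx_suml; apply: eq_bigr => s _.
  by rewrite hch -scalemxAr -scalemxAl.
rewrite IH // !mulmx_suml; apply: eq_bigr => s _.
rewrite -!scalemxAl hF //; by rewrite gtn_eqF.
Qed.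

Definition Emx (m n : nat) (x y : nat) : 'M[CC]_(m, n) :=
  \matrix_(i, j) ((i == x :> nat) && (j == y :> nat))%:R.

Definition ent {m n : nat} (M : 'M[CC]_(m, n)) (x y : nat) : CC :=
  \sum_(i < m) \sum_(j < n) ((i == x :> nat) && (j == y :> nat))%:R * M i j.

Lemma ent_ord {m n} (M : 'M[CC]_(m, n)) (x : 'I_m) (y : 'I_n) : ent M x y = M x y.
Proof.
rewrite /ent (bigD1 x) //= [X in _ + X]big1; last first.
  move=> i hi; apply: big1 => j _; have -> : (i == x :> nat) = false by exact: negbTE hi.
  by rewrite /= mul0r.
rewrite addr0 (bigD1 y) //= [X in _ + X]big1; last first.
  move=> j hj; have -> : (j == y :> nat) = false by exact: negbTE hj.
  by rewrite andbF mul0r.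
by rewrite !eqxx mul1r addr0.
Qed.

Lemma Emx_mid {m n p q} (x1 x2 y1 y2 : nat) (M : 'M[CC]_(n, p)) :
  (Emx m n x1 x2 *m M *m Emx p q y1 y2) = ent M x2 y1 *: Emx m q x1 y2.
Proof.
apply/matrixP => i j; rewrite !mxE /ent mulr_suml.
under eq_bigr => k _ do rewrite !mxE mulr_suml.
rewrite exchange_big /=; apply: eq_bigr => l _; rewrite mulr_suml; apply: eq_bigr => k _.
rewrite !mxE.
by case: (i == x1 :> nat); case: (l == x2 :> nat); case: (k == y1 :> nat);
  case: (j == y2 :> nat); rewrite /= ?mul0r ?mulr0 ?mul1r ?mulr1.
Qed.

Definition rr (qq : nat -> nat) (j : nat) : nat :=
  match j with 0 => 0%N | k.+1 => qq k end.

Definition afam (D : nat -> nat) (pp qq : nat -> nat) (j : nat)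
  : 'M[CC]_(D j.*2, D j.*2.+1) := Emx (D j.*2) (D j.*2.+1) (rr qq j) (pp j).

Lemma chainE (D : nat -> nat) pp qq (b : forall j : nat, 'M[CC]_(D j.*2.+1, D j.+1.*2))
  N w y :
  chain (afam D pp qq) b N *m Emx (D N.*2) w (rr qq N) y
  = (\prod_(j < N) ent (b j) (pp j) (qq j)) *: Emx (D 0) w 0 y.
Proof.
elim: N w y => [|N IH] w y /=.
  by rewrite mul1mx big_ord0 scale1r.
rewrite {1}/afam IH -!scalemxAl Emx_mid big_ord_recr /=.
by rewrite scalerA.
Qed.

Lemma extA_lt (n : nat) (D : nat -> nat)
  (a : forall j : 'I_n, 'M[CC]_(D j.*2, D j.*2.+1)) i (h : (i < n)%N) :
  extA a i = a (Ordinal h).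
Proof.
rewrite /extA.
generalize (erefl (i < n)%N).
case: {2 3}(i < n)%N => e; first by rewrite (bool_irrelevance e h).
by exfalso; move: (h); rewrite e.
Qed.

Lemma extB_ord (n : nat) (D : nat -> nat)
  (b : forall j : 'I_n, 'M[CC]_(D j.*2.+1, D j.+1.*2)) (j : 'I_n) :
  extB b j = b j.
Proof.
case: j => i h /=; rewrite /extB.
generalize (erefl (i < n)%N).
case: {2 3}(i < n)%N => e; first by rewrite (bool_irrelevance e h).
by exfalso; move: (h); rewrite e.
Qed.

Lemma allX (n : nat) (D : nat -> nat) (d e : 'I_n -> nat)
  (A : forall j : 'I_n, 'I_(d j) -> 'M[CC]_(D j.*2, D j.*2.+1))
  (B B' : forall j : 'I_n, 'I_(e j) -> 'M[CC]_(D j.*2.+1, D j.+1.*2)) :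
  (forall j : 'I_n, injective_mps (A j)) ->
  (forall (s : forall j : 'I_n, 'I_(d j)) (t : forall j : 'I_n, 'I_(e j)),
      mps_prod A B s t = mps_prod A B' s t) ->
  forall m, (m <= n)%N -> forall (t : forall j : 'I_n, 'I_(e j))
    (a : forall j : nat, 'M[CC]_(D j.*2, D j.*2.+1)),
    (forall j (h : (j < n)%N), (m <= j)%N -> exists k, a j = A (Ordinal h) k) ->
    chain a (extB (fun j => B j (t j))) n = chain a (extB (fun j => B' j (t j))) n.
Proof.
move=> hinj hyp; elim=> [|m IH] hm t a ha.
  have ex : forall j : 'I_n, exists k, a j == A j k.
    by case=> i hi; have [k hk] := ha i hi (leq0n _); exists k; apply/eqP.
  pose s j := xchoose (ex j).
  have ea : forall i, (i < n)%N -> extA (fun j => A j (s j)) i = a i.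
    move=> i hi; rewrite extA_lt; apply/esym/eqP; exact: (xchooseP (ex (Ordinal hi))).
  rewrite -(@chain_ext D (extA (fun j => A j (s j))) a _ _ n ea (fun _ _ => erefl)).
  rewrite -(@chain_ext D (extA (fun j => A j (s j))) a _ _ n ea (fun _ _ => erefl)).
  exact: hyp.
pose j0 : 'I_n := Ordinal hm.
have [c hc] := @span_inj _ _ _ _ (hinj j0) (a m).
pose F (k : 'I_(d j0)) := dupd (T := fun j => 'M[CC]_(D j.*2, D j.*2.+1)) a m (A j0 k).
have hF : forall k j, j != m -> F k j = a j by move=> k j hj; rewrite /F dupd_neq.
have ham : a m = \sum_k c k *: F k m.
  by rewrite {1}hc; apply: eq_bigr => k _; rewrite /F dupd_eq.
rewrite (@chain_lin D _ n m _ a F c hF ham hm) (@chain_lin D _ n m _ a F c hF ham hm).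
apply: eq_bigr => k _; congr (_ *: _); apply: IH (ltnW hm) t (F k) _.
move=> j hj hmj; case: (eqVneq j m) => [ejm|nejm].
  subst j; have ehj : hj = hm by apply: bool_irrelevance.
  subst hj; exists k; by rewrite /F dupd_eq.
rewrite hF //; apply: ha; by rewrite ltn_neqAle eq_sym nejm hmj.
Qed.

Theorem lemma1 (n : nat) (D : nat -> nat) (d e : 'I_n -> nat)
  (A : forall j : 'I_n, 'I_(d j) -> 'M[CC]_(D j.*2, D j.*2.+1))
  (B B' : forall j : 'I_n, 'I_(e j) -> 'M[CC]_(D j.*2.+1, D j.+1.*2)) :
  (1 <= n)%N ->
  (forall k, (k <= n.*2)%N -> (0 < D k)%N) ->
  (forall j : 'I_n, injective_mps (A j)) ->
  (forall j : 'I_n, exists t, B j t != 0) ->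
  (forall (s : forall j : 'I_n, 'I_(d j)) (t : forall j : 'I_n, 'I_(e j)),
      mps_prod A B s t = mps_prod A B' s t) ->
  exists beta : 'I_n -> CC,
    (forall j, beta j != 0) /\
    \prod_(j < n) beta j = 1 /\
    (forall j t, B j t = beta j *: B' j t).
Proof.
move=> hn hD hinj hB hyp.
have hall := @allX n D d e A B B' hinj hyp n (leqnn n).
have vac : forall (a : forall j : nat, 'M[CC]_(D j.*2, D j.*2.+1)) j (h : (j < n)%N),
    (n <= j)%N -> exists k, a j = A (Ordinal h) k.
  by move=> a j h hj; exfalso; move: hj; rewrite leqNgt h.
have h0 : (0 < D 0)%N := hD 0%N (leq0n _).
have key : forall (t : forall j : 'I_n, 'I_(e j)) (pp qq : nat -> nat),
    \prod_(j < n) ent (B j (t j)) (pp j) (qq j)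
    = \prod_(j < n) ent (B' j (t j)) (pp j) (qq j).
  move=> t pp qq.
  have := congr1 (fun M => M *m Emx (D n.*2) 1 (rr qq n) 0)
    (hall t (afam D pp qq) (vac _)).
  rewrite /= !chainE.
  move/(congr1 (fun M : 'M[CC]_(D 0, 1) => M (Ordinal h0) ord0)).
  rewrite /Emx !mxE /= !mulr1.
  under eq_bigr => j _ do rewrite extB_ord.
  by under [in RHS]eq_bigr => j _ do rewrite extB_ord.
pose tw j := xchoose (hB j).
have exw : forall j : 'I_n, exists xy : 'I_(D j.*2.+1) * 'I_(D j.+1.*2),
    B j (tw j) xy.1 xy.2 != 0.
  move=> j; apply/existsP; apply: (contraNT _ (xchooseP (hB j))) => /existsPn hz.
  by apply/eqP/matrixP => x y; rewrite mxE; apply/eqP; exact: negbNE (hz (x, y)).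
pose xyw j := xchoose (exw j).
pose ppw (i : nat) : nat := if (insub i : option 'I_n) is Some j then nat_of_ord (xyw j).1 else 0%N.
pose qqw (i : nat) : nat := if (insub i : option 'I_n) is Some j then nat_of_ord (xyw j).2 else 0%N.
have ppwE : forall j : 'I_n, ppw j = (xyw j).1 by move=> j; rewrite /ppw valK.
have qqwE : forall j : 'I_n, qqw j = (xyw j).2 by move=> j; rewrite /qqw valK.
pose b j := B j (tw j) (xyw j).1 (xyw j).2.
pose b' j := B' j (tw j) (xyw j).1 (xyw j).2.
have bnz : forall j, b j != 0 by move=> j; exact: (xchooseP (exw j)).
have kw : \prod_(j < n) b j = \prod_(j < n) b' j.
  have := key tw ppw qqw.
  under eq_bigr => j _ do rewrite ppwE qqwE ent_ord.
  by under [in X in _ = X -> _]eq_bigr => j _ do rewrite ppwE qqwE ent_ord.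
have Pnz : \prod_(j < n) b j != 0 by apply/prodf_neq0 => j _.
have b'nz : forall j, b' j != 0.
  by move=> j; move: Pnz; rewrite kw => /prodf_neq0; apply.
exists (fun j => b j / b' j); split; [|split].
- by move=> j; rewrite mulf_neq0 // invr_neq0.
- by rewrite prodf_div kw divff // -kw.
move=> j0 t0; apply/matrixP => x y; rewrite mxE.
pose t := dupd (T := fun j => 'I_(e j)) tw j0 t0.
pose pp := dupd (T := fun _ => nat) ppw (nat_of_ord j0) (nat_of_ord x).
pose qq := dupd (T := fun _ => nat) qqw (nat_of_ord j0) (nat_of_ord y).
have := key t pp qq.
have eqo : forall (BB : forall j : 'I_n, 'I_(e j) -> 'M[CC]_(D j.*2.+1, D j.+1.*2)) j,
    j != j0 -> ent (BB j (t j)) (pp j) (qq j) = BB j (tw j) (xyw j).1 (xyw j).2.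
  move=> BB j hj; rewrite /t /pp /qq !dupd_neq //.
  by rewrite ppwE qqwE ent_ord.
have eq0 : forall (BB : forall j : 'I_n, 'I_(e j) -> 'M[CC]_(D j.*2.+1, D j.+1.*2)),
    ent (BB j0 (t j0)) (pp j0) (qq j0) = BB j0 t0 x y.
  by move=> BB; rewrite /t /pp /qq !dupd_eq ent_ord.
rewrite (bigD1 j0) // [in X in _ = X -> _](bigD1 j0) //= !eq0.
rewrite (eq_bigr (fun j => b j)); last by move=> j hj; rewrite eqo.
rewrite [in X in _ = X -> _](eq_bigr (fun j => b' j)); last by move=> j hj; rewrite eqo.
move: kw; rewrite (bigD1 j0) // [in X in _ = X -> _](bigD1 j0) //=.
set P := \prod_(j | j != j0) b j; set P' := \prod_(j | j != j0) b' j.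
move=> h2 h1.
have hP : P != 0.
  by apply/prodf_neq0 => j _; apply: bnz.
have hb0 := b'nz j0.
have -> : B j0 t0 x y = B' j0 t0 x y * P' / P by rewrite -h1 mulfK.
have -> : b j0 = b' j0 * P' / P by rewrite -h2 mulfK.
have e1 : b' j0 * P' / P / b' j0 = P' / P.
  by rewrite mulrAC (mulrC (b' j0)) mulfK.
by rewrite e1 [RHS]mulrC mulrA.
Qed.
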